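(* For every integer $n\ge 2$ there exists a weighted undirected graph $G$ on $n$ vertices with $\mathrm{cdim}(G)=2n-3$.
   Context: A weighted undirected graph $G=(V,w)$ consists of a finite vertex set $V$ and a weight function $w$ assigning a nonnegative real number to each unordered pair of distinct vertices. The edge set is $E=\{e : w(e)>0\}$, $m=|E|$. For $\emptyset \ne X \subsetneq V$, $\Delta(X)$ denotes the set of edges of $E$ with exactly one endpoint in $X$ (a cut), with weight $w(\Delta(X))=\sum_{e\in\Delta(X)}w(e)$. $\mathcal{M}(G)$ is the set of cuts of minimum weight. For $S\subseteq E$, $\chi(S)\in\{0,1\}^m$ is its characteristic vector indexed by $E$. The cut dimension is $\mathrm{cdim}(G)=\dim\,\mathrm{span}\{\chi(S): S\in\mathcal{M}(G)\}$. *)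

(* Defs.v *)
From HB Require Import structures.
From mathcomp Require Import all_boot all_order all_algebra.
From mathcomp Require Import reals.
Set Implicit Arguments. Unset Strict Implicit. Unset Printing Implicit Defensive.
Import Order.TTheory GRing.Theory Num.Theory.
Local Open Scope ring_scope.

(* Vertex set V = 'I_n.  Unordered pairs of distinct vertices are the
   2-element subsets of 'I_n.  A weight function is w : {set 'I_n} -> R,
   only its values on 2-element sets matter. *)

Section CutDim.
Variables (R : realType) (n : nat) (w : {set 'I_n} -> R).

Definition nonneg_weight : Prop := forall e : {set 'I_n}, #|e| = 2%N -> 0 <= w e.

Definition edges : {set {set 'I_n}} := [set e : {set 'I_n} | (#|e| == 2%N) && (0 < w e)].

Definition cut (X : {set 'I_n}) : {set {set 'I_n}} :=
  [set e in edges | #|e :&: X| == 1%N].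

Definition cut_weight (X : {set 'I_n}) : R := \sum_(e in cut X) w e.

Definition proper_nonempty (X : {set 'I_n}) : bool := (X != set0) && (X != setT).

Definition min_cut_sideb (X : {set 'I_n}) : bool :=
  proper_nonempty X &&
  [forall Y : {set 'I_n}, proper_nonempty Y ==> (cut_weight X <= cut_weight Y)].

Definition chi (S : {set {set 'I_n}}) : 'rV[R]_#|edges| :=
  \row_(i < #|edges|) (if enum_val i \in S then 1 else 0).

Definition cdim : nat :=
  \rank (\sum_(X : {set 'I_n} | min_cut_sideb X) <<chi (cut X)>>)%MS.

End CutDim.

(* Main.v *)
Require Import Defs.
From HB Require Import structures.
From mathcomp Require Import all_boot all_order all_algebra.
From mathcomp Require Import reals.
From mathcomp Require Import zify.
Set Implicit Arguments. Unset Strict Implicit. Unset Printing Implicit Defensive.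
Import Order.TTheory GRing.Theory Num.Theory.

Section Comb.
Variable N : nat.
Local Notation n := N.+2.

Definition s1 (i : nat) : nat := if i.+1 < n then i.+1 else 0.
Definition s2 (i : nat) : nat :=
  if i %% 2 == 1 then (if i + 2 < n then i + 2 else if i + 1 < n then i + 1 else i - 1)
  else (if i == 0 then 1 else i - 2).

Ltac unf := rewrite /s1 /s2; repeat case: ifP => /= ?.

Lemma s1_lt i : i < n -> s1 i < n. Proof. unf; lia. Qed.
Lemma s2_lt i : i < n -> s2 i < n. Proof. unf; lia. Qed.
Lemma s1_nfix i : i < n -> s1 i != i. Proof. unf; lia. Qed.
Lemma s2_nfix i : i < n -> s2 i != i. Proof. unf; lia. Qed.
Lemma s1_inj i j : i < n -> j < n -> s1 i = s1 j -> i = j.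
Proof. rewrite /s1; do 2 case: ifP => /= ?; lia. Qed.
Lemma s2_inj i j : i < n -> j < n -> s2 i = s2 j -> i = j.
Proof.
rewrite /s2; case: ifP => ?; (try case: ifP => ?); (try case: ifP => ?);
 case: ifP => ?; (try case: ifP => ?); (try case: ifP => ?); lia.
Qed.
Definition shape i j := (j = i + 1 \/ j = i + 2 \/ i = j + 1 \/ i = j + 2 \/ (i = n - 1 /\ j = 0)).
Lemma s1_shape i : i < n -> shape i (s1 i).
Proof. rewrite /shape; unf; lia. Qed.
Lemma s2_shape i : i < n -> shape i (s2 i).
Proof. rewrite /shape; unf; lia. Qed.

Lemma s1_closed (P : nat -> bool) : (forall i, i < n -> P i = P (s1 i)) ->
  forall i, i < n -> P i = P 0.
Proof.
move=> h; elim=> [//|i IH] lt; rewrite -IH ?(ltnW lt) // (h i (ltnW lt)).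
by rewrite /s1 lt.
Qed.

Lemma s2_closed (P : nat -> bool) : (forall i, i < n -> P i = P (s2 i)) ->
  forall i, i < n -> P i = P 0.
Proof.
move=> h.
have ev : forall j, j.*2 < n -> P j.*2 = P 0.
  elim=> [//|j IH] lt; rewrite h // /s2.
  have -> : (j.+1.*2 %% 2 == 1) = false by lia.
  have -> : (j.+1.*2 == 0) = false by lia.
  have -> : j.+1.*2 - 2 = j.*2 by lia.
  apply: IH; lia.
have od : forall j, j.*2.+1 < n -> P j.*2.+1 = P 0.
  elim=> [lt|j IH lt]; first by rewrite [RHS]h // /s2.
  rewrite -IH; last lia.
  rewrite [RHS]h; last lia.
  rewrite /s2.
  have -> : (j.*2.+1 %% 2 == 1) = true by lia.
  have -> : j.*2.+1 + 2 < n by lia.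
  congr P; lia.
move=> i lt; have := odd_double_half i; case: (odd i) => /= E; rewrite -E.
  by rewrite add1n; apply: od; lia.
by rewrite add0n; apply: ev; lia.
Qed.

Lemma s1_prefix k i : 1 <= k -> k < n -> i < n -> (i < k) != (s1 i < k) ->
  i = k - 1 \/ i = n - 1.
Proof. unf; lia. Qed.

Lemma s2_prefix k i : 2 <= k -> k <= n - 2 -> i < n -> (i < k) != (s2 i < k) ->
  i = k + k %% 2 \/ i = k - 2 + (k + 1) %% 2.
Proof. unf; lia. Qed.

End Comb.

Lemma card_setb (T : finType) (P : pred T) : #|[set v | P v]| = \sum_v (P v : nat).
Proof. rewrite -sum1_card big_mkcond; apply: eq_bigr => v _; rewrite inE; by case: (P v). Qed.

Lemma sum_eq_in (T : finType) (A : {pred T}) (x : T) :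
  \sum_(e in A) ((x == e) : nat) = (x \in A).
Proof.
case: (boolP (x \in A)) => xA.
  rewrite (bigD1 x) //= eqxx big1 // => e /andP[_ ne]; by rewrite eq_sym (negbTE ne).
by rewrite big1 // => e eA; case: eqP => // ex; rewrite ex eA in xA.
Qed.

Lemma set1I' (T : finType) (a : T) (Y : {set T}) :
  [set a] :&: Y = if a \in Y then [set a] else set0.
Proof.
apply/setP => x; rewrite !inE; case: eqP => [->|ne]; case: (a \in Y); rewrite ?inE ?eqxx //.
all: by case: eqP.
Qed.

Lemma cardI2 (T : finType) (a b : T) (Y : {set T}) : a != b ->
  (#|[set a; b] :&: Y| == 1) = ((a \in Y) != (b \in Y)).
Proof.
move=> ab; rewrite setIUl !set1I'.
case: (a \in Y); case: (b \in Y) => /=; rewrite ?set0U ?setU0 ?cards1 ?cards0 //.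
by rewrite cards2 ab.
Qed.

Section Graph.
Variable R : realType.
Variable N : nat.
Local Notation n := N.+2.
Implicit Types (Y : {set 'I_n}) (e : {set 'I_n}).

Definition sig1 (v : 'I_n) : 'I_n := inord (s1 N v).
Definition sig2 (v : 'I_n) : 'I_n := inord (s2 N v).
Lemma sig1E v : (sig1 v : nat) = s1 N v. Proof. by rewrite /sig1 inordK // s1_lt. Qed.
Lemma sig2E v : (sig2 v : nat) = s2 N v. Proof. by rewrite /sig2 inordK // s2_lt. Qed.

Definition mult (sg : 'I_n -> 'I_n) e := #|[set v | [set v; sg v] == e]|.
Definition wt e : R := ((mult sig1 e + mult sig2 e)%N)%:R.
Definition cross (sg : 'I_n -> 'I_n) Y := #|[set v | (v \in Y) != (sg v \in Y)]|.

Definition good (sg : 'I_n -> 'I_n) :=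
  [/\ injective sg, forall v, sg v != v, forall v, (0 < mult sg [set v; sg v])%N &
      forall Y, (forall v, (v \in Y) = (sg v \in Y)) -> forall v, (v \in Y) = (ord0 \in Y)].

Lemma good1 : good sig1.
Proof.
split.
- move=> u v /(congr1 (@nat_of_ord _)); rewrite !sig1E => /s1_inj h; apply: val_inj; exact: h.
- move=> v; rewrite -(inj_eq (@ord_inj _)) sig1E; exact: s1_nfix.
- by move=> v; apply/card_gt0P; exists v; rewrite inE.
- move=> Y h v.
  have H : forall i, i < n -> (inord i \in Y) = (inord 0 \in Y).
    apply: (@s1_closed N (fun i => inord i \in Y)).
    move=> i lt; rewrite h; congr (_ \in Y); apply: ord_inj; by rewrite sig1E !inordK // s1_lt.
  rewrite -(inord_val v) H //; congr (_ \in Y); apply: ord_inj; by rewrite /= inordK.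
Qed.

Lemma good2 : good sig2.
Proof.
split.
- move=> u v /(congr1 (@nat_of_ord _)); rewrite !sig2E => /s2_inj h; apply: val_inj; exact: h.
- move=> v; rewrite -(inj_eq (@ord_inj _)) sig2E; exact: s2_nfix.
- by move=> v; apply/card_gt0P; exists v; rewrite inE.
- move=> Y h v.
  have H : forall i, i < n -> (inord i \in Y) = (inord 0 \in Y).
    apply: (@s2_closed N (fun i => inord i \in Y)).
    move=> i lt; rewrite h; congr (_ \in Y); apply: ord_inj; by rewrite sig2E !inordK // s2_lt.
  rewrite -(inord_val v) H //; congr (_ \in Y); apply: ord_inj; by rewrite /= inordK.
Qed.

Lemma edges_wt e : (e \in edges wt) = (#|e| == 2) && (0 < mult sig1 e + mult sig2 e)%N.
Proof. by rewrite inE ltr0n. Qed.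

Lemma key sg : good sg -> (sg = sig1 \/ sg = sig2) -> forall Y,
  (\sum_(e in cut wt Y) mult sg e)%N = cross sg Y.
Proof.
move=> [inj nfix mpos _] hsg Y.
rewrite /cross card_setb.
rewrite (eq_bigr (fun e => \sum_v (([set v; sg v] == e) : nat))%N); last first.
  by move=> e _; rewrite /mult card_setb.
rewrite exchange_big /=; apply: eq_bigr => v _.
rewrite sum_eq_in inE edges_wt cardI2 ?cards2; last by rewrite (eq_sym v (sg v)) nfix.
rewrite (eq_sym v (sg v)) nfix /=.
suff -> : (0 < mult sig1 [set v; sg v] + mult sig2 [set v; sg v])%N by [].
by case: hsg => E; rewrite addn_gt0 -E (mpos v) ?orbT.
Qed.

Lemma cwE Y : cut_weight wt Y = (((cross sig1 Y + cross sig2 Y)%N)%:R)%R.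
Proof.
rewrite /cut_weight /wt -(key good1 (or_introl erefl)) -(key good2 (or_intror erefl)).
by rewrite -big_split /= natr_sum.
Qed.

Lemma card_sum (Y : {set 'I_n}) : #|Y| = (\sum_v ((v \in Y) : nat))%N.
Proof. rewrite -sum1_card big_mkcond; apply: eq_bigr => v _; by case: (v \in Y). Qed.

Lemma cross_ge2 sg : good sg -> forall Y, Y != set0 -> Y != setT -> (2 <= cross sg Y)%N.
Proof.
move=> [inj nfix _ clo] Y Y0 YT.
have par : (cross sg Y + 2 * #|[set v | (v \in Y) && (sg v \in Y)]| = 2 * #|Y|)%N.
  rewrite /cross !card_setb big_distrr /= -big_split /=.
  rewrite mul2n -addnn {1}card_sum card_sum.
  rewrite [X in (_ = (_ + X))%N](reindex_inj inj) /= -big_split /=.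
  by apply: eq_bigr => v _; case: (v \in Y); case: (sg v \in Y).
suff : cross sg Y != 0%N by lia.
apply/negP => /eqP /cards0_eq h.
have cl : forall v, (v \in Y) = (sg v \in Y).
  move=> v; apply/eqP; apply/negPn/negP => hv.
  by have := in_set0 v; rewrite -h inE hv.
have := clo Y cl; case: (boolP (ord0 \in Y)) => h0 hall.
  by move/negP: YT; apply; apply/eqP/setP => v; rewrite inE hall.
by move/negP: Y0; apply; apply/eqP/setP => v; rewrite inE hall.
Qed.

Lemma proper_single (v : 'I_n) : proper_nonempty [set v].
Proof.
apply/andP; split; first by apply/set0Pn; exists v; rewrite inE.
apply/negP => /eqP h.
have : (inord (if (v : nat) == 0%N then 1%N else 0%N) : 'I_n) \in [set v] by rewrite h inE.
rewrite inE => /eqP /(congr1 (@nat_of_ord _)); rewrite inordK; last by case: ifP.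
by case: ifP => /eqP; lia.
Qed.

Lemma cross_single sg : good sg -> forall v, cross sg [set v] = 2%N.
Proof.
move=> g v; apply/eqP; rewrite eqn_leq; apply/andP; split; last first.
  by case/andP: (proper_single v) => h0 hT; apply: cross_ge2.
case: g => inj nfix _ _.
apply: leq_trans (_ : #|[set v; invF inj v]| <= 2)%N; last by rewrite cards2; case: eqP.
apply: subset_leq_card; apply/subsetP => u; rewrite !inE.
case: (eqVneq u v) => [->|ne]; first by move=> _; apply/orP; left.
move=> h; have e : sg u = v by apply/eqP; move: h; case: (sg u == v).
apply/eqP; by rewrite -e invF_f.
Qed.

Lemma cut_setC Y : cut wt (~: Y) = cut wt Y.
Proof.
have h : forall e, e \in edges wt -> (#|e :&: ~: Y| == 1%N) = (#|e :&: Y| == 1%N).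
  move=> e; rewrite edges_wt => /andP[/cards2P [a [b [ab ->]]] _].
  by rewrite !cardI2 // !inE; case: (a \in Y); case: (b \in Y).
rewrite /cut; apply/setP => e; rewrite !inE.
case: (boolP ((#|e| == 2%N) && (0 < wt e)%R)) => //= eE; apply: h; by rewrite inE.
Qed.

Lemma cw_setC Y : cut_weight wt (~: Y) = cut_weight wt Y.
Proof. by rewrite /cut_weight cut_setC. Qed.

Local Open Scope ring_scope.

Lemma cw_ge4 Y : proper_nonempty Y -> 4%:R <= cut_weight wt Y :> R.
Proof.
case/andP => Y0 YT; rewrite cwE ler_nat.
have := cross_ge2 good1 Y0 YT; have := cross_ge2 good2 Y0 YT; lia.
Qed.


Lemma cw_single v : cut_weight wt [set v] = 4%:R :> R.
Proof. by rewrite cwE (cross_single good1) (cross_single good2). Qed.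

Lemma min_side_of Y : proper_nonempty Y -> cut_weight wt Y = 4%:R -> min_cut_sideb wt Y.
Proof.
move=> pY cY; rewrite /min_cut_sideb pY /=; apply/forallP => Z; apply/implyP => pZ.
by rewrite cY cw_ge4.
Qed.

Lemma min_side_cross X : min_cut_sideb wt X -> cross sig1 X = 2%N /\ cross sig2 X = 2%N.
Proof.
case/andP => /andP[X0 XT] /forallP /(_ [set ord0]); rewrite proper_single /= cw_single.
rewrite cwE ler_nat => h.
have := cross_ge2 good1 X0 XT; have := cross_ge2 good2 X0 XT; lia.
Qed.

End Graph.

Section S.
Variable R : realType.
Variable N : nat.
Local Notation n := N.+2.
Local Notation wt := (@wt R N).
Local Notation sig1 := (@sig1 N).
Local Notation sig2 := (@sig2 N).

Definition Q (k : nat) : {set 'I_n} := [set i : 'I_n | (i < k)%N].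
Definition Sp := (\sum_(X | min_cut_sideb wt X) <<chi wt (cut wt X)>>)%MS.

Lemma inS X : min_cut_sideb wt X -> (chi wt (cut wt X) <= Sp)%MS.
Proof. move=> h; apply: (sumsmx_sup X) => //; by rewrite genmxE. Qed.

Lemma cross_le2 (sg : 'I_n -> 'I_n) (s : nat -> nat) (sgE : forall v, (sg v : nat) = s v) (Y : {set 'I_n}) (P : nat -> bool)
  (YE : forall v : 'I_n, (v \in Y) = P v) a b (ha : (a < n)%N) (hb : (b < n)%N)
  (H : forall i, (i < n)%N -> P i != P (s i) -> i = a \/ i = b) : (cross sg Y <= 2)%N.
Proof.
apply: leq_trans (_ : #|[set (inord a : 'I_n); inord b]| <= 2)%N; last by rewrite cards2; case: eqP.
apply: subset_leq_card; apply/subsetP => u; rewrite !inE !YE sgE => /H.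
case/(_ (ltn_ord u)) => e; apply/orP; [left|right]; apply/eqP/ord_inj; by rewrite inordK // e.
Qed.

Lemma QE k (v : 'I_n) : (v \in Q k) = (v < k)%N.
Proof. by rewrite inE. Qed.

Lemma minQ k : (2 <= k <= N)%N -> min_cut_sideb wt (Q k).
Proof.
case/andP=> k2 kN.
have pQ : proper_nonempty (Q k).
  apply/andP; split; first by apply/set0Pn; exists ord0; rewrite inE /=; lia.
  apply/negP => /eqP h; have : (ord_max : 'I_n) \in Q k by rewrite h inE.
  rewrite inE /=; lia.
apply: min_side_of => //.
case/andP: pQ => Q0 QT.
have c1 : cross sig1 (Q k) = 2%N.
  apply/eqP; rewrite eqn_leq (cross_ge2 (good1 N) Q0 QT) andbT.
  apply: (@cross_le2 sig1 (s1 N) (@sig1E N) _ (fun i => (i < k)%N) (QE k) (k - 1) N.+1);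
    try lia; move=> i lt h; apply: (@s1_prefix N k i) => //; lia.
have c2 : cross sig2 (Q k) = 2%N.
  apply/eqP; rewrite eqn_leq (cross_ge2 (good2 N) Q0 QT) andbT.
  apply: (@cross_le2 sig2 (s2 N) (@sig2E N) _ (fun i => (i < k)%N) (QE k)
     (k + k %% 2) (k - 2 + (k + 1) %% 2)); try lia.
  move=> i lt h; apply: (@s2_prefix N k i) => //; lia.
by rewrite cwE c1 c2.
Qed.

Lemma cut0 : cut wt set0 = set0.
Proof. by apply/setP => e; rewrite /cut in_set setI0 cards0 andbF inE. Qed.

Lemma chi0 : chi wt set0 = 0%R.
Proof. by apply/matrixP => i j; rewrite !mxE inE. Qed.

Lemma chiQ k : (chi wt (cut wt (Q k)) <= Sp)%MS.
Proof.
case: (leqP n k) => kn.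
  have -> : Q k = ~: set0 by apply/setP => v; rewrite !inE; have := ltn_ord v; lia.
  by rewrite cut_setC cut0 chi0 sub0mx.
case: k kn => [|[|k]] kn.
- have -> : Q 0 = set0 by apply/setP => v; rewrite !inE.
  by rewrite cut0 chi0 sub0mx.
- have -> : Q 1 = [set ord0] by apply/setP => v; rewrite !inE; case: v => [[|v] ?].
  by apply: inS; apply: min_side_of; [exact: proper_single | exact: cw_single].
case: (leqP k.+2 N) => kN.
  by apply: inS; apply: minQ; rewrite kN.
have -> : Q k.+2 = ~: [set ord_max].
  apply/setP => v; rewrite !inE -(inj_eq (@ord_inj _)) /=; have := ltn_ord v; lia.
rewrite cut_setC.
by apply: inS; apply: min_side_of; [exact: proper_single | exact: cw_single].
Qed.

Definition Mk (k : nat) := [set e in edges wt | [exists x in e, (x : nat) == k] && (e \subset Q k.+1)].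
Definition Lk (k : nat) := [set e in edges wt | [exists x in e, (x : nat) == k] && (e \subset ~: Q k)].

Lemma chiE T j : chi wt T ord0 j = (((enum_val j \in T) : nat)%:R)%R.
Proof. by rewrite /chi mxE; case: (_ \in _). Qed.

Lemma ifE (b : bool) : ((if b then 1%R else 0%R) : R) = ((b : nat)%:R)%R.
Proof. by case: b. Qed.

Lemma cut_mem Y e : e \in edges wt -> (e \in cut wt Y) = (#|e :&: Y| == 1%N).
Proof. by move=> eE; rewrite /cut in_set eE. Qed.

Lemma edge2 e : e \in edges wt -> exists a b, a != b /\ e = [set a; b].
Proof. by rewrite edges_wt => /andP[/cards2P h _]. Qed.

Lemma ex2 (P : pred 'I_n) a b : [exists x in [set a; b], P x] = P a || P b.
Proof.
apply/existsP/orP => [[x /andP[]]|[h|h]]; first by rewrite !inE => /orP[]/eqP-> h; [left|right].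
  by exists a; rewrite !inE eqxx.
by exists b; rewrite !inE eqxx orbT.
Qed.

Lemma sub2 a b (A : {set 'I_n}) : ([set a; b] \subset A) = (a \in A) && (b \in A).
Proof. by rewrite subUset !sub1set. Qed.

Lemma Mid k : (k < n)%N ->
  (chi wt (cut wt [set inord k]) + chi wt (cut wt (Q k)) =
   chi wt (cut wt (Q k.+1)) + 2%:R *: chi wt (Mk k))%R.
Proof.
move=> kn; apply/matrixP => i j; rewrite (ord1 i) !mxE !ifE.
have eE := enum_valP j; have [a [b [ab eab]]] := edge2 eE.
rewrite !cut_mem // eab !cardI2 // /Mk in_set -eab eE eab /= ex2 sub2 !inE.
rewrite -!(inj_eq (@ord_inj _)) !inordK //.
rewrite -!natrD -natrM -natrD; congr (_%:R)%R.
move: ab; rewrite -(inj_eq (@ord_inj _)); lia.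
Qed.

Lemma Lid k : (k < n)%N ->
  (chi wt (cut wt [set inord k]) + chi wt (cut wt (Q k.+1)) =
   chi wt (cut wt (Q k)) + 2%:R *: chi wt (Lk k))%R.
Proof.
move=> kn; apply/matrixP => i j; rewrite (ord1 i) !mxE !ifE.
have eE := enum_valP j; have [a [b [ab eab]]] := edge2 eE.
rewrite !cut_mem // eab !cardI2 // /Lk in_set -eab eE eab /= ex2 sub2 !inE.
rewrite -!(inj_eq (@ord_inj _)) !inordK //.
rewrite -!natrD -natrM -natrD; congr (_%:R)%R.
move: ab; rewrite -(inj_eq (@ord_inj _)); lia.
Qed.

End S.

Section D.
Variable R : realType.
Variable N : nat.
Local Notation n := N.+2.
Local Notation wt := (@wt R N).
Local Notation sig1 := (@sig1 N).
Local Notation sig2 := (@sig2 N).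

Lemma set2_eqN (a b c d : 'I_n) : [set a; b] = [set c; d] ->
  ((a : nat) = c /\ (b : nat) = d) \/ ((a : nat) = d /\ (b : nat) = c).
Proof.
move=> E.
have h x : (x \in [set a; b]) = (x \in [set c; d]) by rewrite E.
move: (h a) (h b) (h c) (h d); rewrite !inE !eqxx /= ?orbT.
rewrite -!(inj_eq (@ord_inj _)); lia.
Qed.

Definition sh (a b : nat) := b = a.+1 \/ b = a.+2 \/ (a = 0%N /\ b = N.+1).

Lemma shape_pair (v w : 'I_n) : shape N v w ->
  exists a b : 'I_n, [/\ (a < b)%N, [set v; w] = [set a; b] & sh a b].
Proof.
rewrite /shape /sh => hs.
case: (ltnP v w) => h; [exists v, w | exists w, v]; split => //; try lia.
  by rewrite setUC.
Qed.

Lemma edge_shape e : e \in edges wt ->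
  exists a b : 'I_n, [/\ (a < b)%N, e = [set a; b] & sh a b].
Proof.
rewrite edges_wt => /andP[_]; rewrite addn_gt0 => /orP[] /card_gt0P [v]; rewrite inE => /eqP <-.
  by apply: shape_pair; rewrite sig1E; apply: s1_shape.
by apply: shape_pair; rewrite sig2E; apply: s2_shape.
Qed.

Lemma pair_edge1 v : [set v; sig1 v] \in edges wt.
Proof.
case: (good1 N) => _ nfix mpos _.
by rewrite edges_wt cards2 (eq_sym v) nfix /= addn_gt0 (mpos v).
Qed.

Lemma pair_edge2 v : [set v; sig2 v] \in edges wt.
Proof.
case: (good2 N) => _ nfix mpos _.
by rewrite edges_wt cards2 (eq_sym v) nfix /= addn_gt0 (mpos v) orbT.
Qed.

Lemma edge_of_shape (a b : nat) : (a < b)%N -> (b < n)%N -> sh a b ->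
  [set (inord a : 'I_n); inord b] \in edges wt.
Proof.
rewrite /sh => ab bn [e|[e|[e0 e1]]].
- have -> : (inord b : 'I_n) = sig1 (inord a).
    by apply: ord_inj; rewrite sig1E /s1 !inordK; try lia; case: ifP; lia.
  exact: pair_edge1.
- case: (boolP (a %% 2 == 1)%N) => od.
    have -> : (inord b : 'I_n) = sig2 (inord a).
      by apply: ord_inj; rewrite sig2E /s2 !inordK ?od; try lia; case: ifP; lia.
    exact: pair_edge2.
  rewrite setUC.
  have -> : (inord a : 'I_n) = sig2 (inord b).
    apply: ord_inj; rewrite sig2E /s2 !inordK; try lia.
    have -> : (b %% 2 == 1)%N = false by lia.
    have -> : (b == 0)%N = false by lia.
    lia.
  exact: pair_edge2.
- rewrite setUC.
  have -> : (inord a : 'I_n) = sig1 (inord b).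
    by apply: ord_inj; rewrite sig1E /s1 !inordK; try lia; case: ifP; lia.
  exact: pair_edge1.
Qed.


Section Count.
Hypothesis hN : (2 <= N)%N.

Definition ef (x : ('I_N.+1 + 'I_N + unit)%type) : {set 'I_n} :=
 match x with
 | inl (inl i) => [set inord i; inord i.+1]
 | inl (inr i) => [set inord i; inord i.+2]
 | inr _ => [set inord 0; inord N.+1]
 end.

Lemma ef_inj : injective ef.
Proof.
move=> x y; case: x => [[i|i]|[]]; case: y => [[j|j]|[]] => //= E; move: (set2_eqN E).
all: try (have bi := ltn_ord i); try (have bj := ltn_ord j).
all: rewrite ?inordK; try lia.
- by move=> h; congr (inl (inl _)); apply: val_inj => /=; lia.
- by move=> h; congr (inl (inr _)); apply: val_inj => /=; lia.
Qed.

Lemma edges_ef : edges wt = [set ef x | x in setT].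
Proof.
apply/setP => e; apply/idP/imsetP => [eE|[x _ ->]].
  have [a [b [ab -> hs]]] := edge_shape eE.
  have bn := ltn_ord b.
  case: hs => [e1|[e2|[e0 e1]]].
  - have ai : (a < N.+1)%N by lia.
    exists (inl (inl (Ordinal ai))) => //=; congr [set _; _]; apply: ord_inj; rewrite inordK //=; lia.
  - have ai : (a < N)%N by lia.
    exists (inl (inr (Ordinal ai))) => //=; congr [set _; _]; apply: ord_inj; rewrite inordK //=; lia.
  - exists (inr tt) => //=; congr [set _; _]; apply: ord_inj; rewrite inordK //=; lia.
case: x => [[i|i]|[]] /=; try have bi := ltn_ord i; apply: edge_of_shape; rewrite /sh; lia.
Qed.

Lemma card_edges : #|edges wt| = (N.+1 + N + 1)%N.
Proof.
rewrite edges_ef card_imset; last exact: ef_inj.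
rewrite cardsT (@fintype.card_sum ('I_N.+1 + 'I_N)%type unit) fintype.card_sum !card_ord card_unit.
done.
Qed.

End Count.

End D.

Section E.
Variable R : realType.
Variable N : nat.
Local Notation n := N.+2.
Local Notation wt := (@wt R N).
Local Notation sig1 := (@sig1 N).
Local Notation sig2 := (@sig2 N).
Local Notation m := #|edges wt|.
Local Notation Sp := (@Sp R N).
Local Notation chi := (chi wt).
Local Open Scope ring_scope.

Lemma subB p (A B : 'rV[R]_m) (C : 'M_(p, m)) : (A <= C)%MS -> (B <= C)%MS -> (A - B <= C)%MS.
Proof. by move=> hA hB; apply: addmx_sub => //; rewrite -scaleN1r scalemx_sub. Qed.

Lemma chi_single_in k : (k < n)%N -> (chi (cut wt [set inord k]) <= Sp)%MS.
Proof. by move=> _; apply: inS; apply: min_side_of; [exact: proper_single | exact: cw_single]. Qed.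

Lemma two_neq0 : (2%:R : R) != 0.
Proof. by rewrite pnatr_eq0. Qed.

Lemma chiM k : (k < n)%N -> (chi (Mk R N k) <= Sp)%MS.
Proof.
move=> kn; have E := Mid R kn.
have -> : chi (Mk R N k) = (2%:R)^-1 *: (chi (cut wt [set inord k]) + chi (cut wt (Q N k))
    - chi (cut wt (Q N k.+1)))%R.
  by rewrite E addrAC subrr add0r scalerA mulVf ?two_neq0 // scale1r.
by apply: scalemx_sub; apply: subB; [apply: addmx_sub|]; rewrite ?chi_single_in ?chiQ.
Qed.

Lemma chiL k : (k < n)%N -> (chi (Lk R N k) <= Sp)%MS.
Proof.
move=> kn; have E := Lid R kn.
have -> : chi (Lk R N k) = (2%:R)^-1 *: (chi (cut wt [set inord k]) + chi (cut wt (Q N k.+1))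
    - chi (cut wt (Q N k)))%R.
  by rewrite E addrAC subrr add0r scalerA mulVf ?two_neq0 // scale1r.
by apply: scalemx_sub; apply: subB; [apply: addmx_sub|]; rewrite ?chi_single_in ?chiQ.
Qed.

Lemma chi_sum (A : {set {set 'I_n}}) : chi A = (\sum_(x in A) chi [set x])%R.
Proof.
apply/matrixP => i j; rewrite summxE !mxE ifE.
rewrite (eq_bigr (fun x => (((enum_val j == x) : nat)%:R)%R)); last first.
  by move=> x _; rewrite mxE in_set1; case: eqP.
by rewrite -natr_sum sum_eq_in.
Qed.

Lemma minus_known p (A : {set {set 'I_n}}) x0 (T : 'M[R]_(p, m)) :
  x0 \in A -> (chi A <= T)%MS -> (forall x, x \in A -> x != x0 -> (chi [set x] <= T)%MS) ->
  (chi [set x0] <= T)%MS.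
Proof.
move=> x0A hA hx.
have : chi [set x0] = (chi A - \sum_(x in A | x != x0) chi [set x])%R.
  by rewrite (chi_sum A) (bigD1 x0 x0A) /= addrK.
move=> ->; apply: subB => //; apply: summx_sub => x /andP[]; exact: hx.
Qed.

Section Low.

Definition r0 : {set 'I_n} := [set inord 0; inord N.+1].
Definition T := (Sp + <<chi [set r0]>>)%MS.

Lemma ST p (X : 'M[R]_(p, m)) : (X <= Sp)%MS -> (X <= T)%MS.
Proof. move=> h; apply: submx_trans h _; exact: addsmxSl. Qed.

Lemma rT : (chi [set r0] <= T)%MS.
Proof. by rewrite /T; apply: submx_trans (addsmxSr _ _); rewrite genmxE. Qed.

Lemma edge_sh (a b : 'I_n) : (a < b)%N -> sh N a b -> [set a; b] \in edges wt.
Proof. move=> ab hs; rewrite -(inord_val a) -(inord_val b); apply: edge_of_shape => //. Qed.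

Lemma claim j : forall a b : 'I_n, (a < b)%N -> (a < j)%N -> sh N a b ->
  (chi [set [set a; b]] <= T)%MS.
Proof.
elim: j => [//|j IH] a b ab aj hs.
case: (ltnP a j) => aj'; first exact: IH.
have ea : (a : nat) = j by lia.
have bn := ltn_ord b.
have an1 : (a.+1 < n)%N by lia.
pose p := [set a; (inord a.+1 : 'I_n)].
have pE : p \in edges wt.
  rewrite /p edge_sh ?inordK //; rewrite /sh; lia.
have hp : (chi [set p] <= T)%MS.
  apply: (@minus_known _ (Mk R N a.+1)); last first.
  - move=> x /[dup] xM; rewrite /Mk in_set => /andP[xE /andP[]].
    have [c [d [cd -> hcd]]] := edge_shape xE.
    rewrite ex2 sub2 !inE => hx /andP[hc hd] xp.
    case: (ltnP c a) => ca; first by apply: IH => //; lia.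
    have ec : c = a by apply: ord_inj; lia.
    have ed : d = inord a.+1 by apply: ord_inj; rewrite inordK //; lia.
    by move: xp; rewrite ec ed eqxx.
  - by apply: ST; apply: chiM.
  - rewrite /Mk in_set pE /p ex2 sub2 !inE inordK //=; apply/andP; split; first by rewrite eqxx orbT.
    by apply/andP; split; lia.
have Ea := ltnn 0.
case: (boolP ((b : nat) == a.+1)) => [/eqP eb|nb].
  have -> : b = inord a.+1 by apply: ord_inj; rewrite inordK.
  exact: hp.
case: (boolP (((a : nat) == 0%N) && ((b : nat) == N.+1))) => [/andP[/eqP a0 /eqP bN]|nr].
  have -> : [set a; b] = r0.
    by rewrite /r0; congr [set _; _]; apply: ord_inj; rewrite inordK.
  exact: rT.
have eb : (b : nat) = a.+2.
  move: hs nb nr; rewrite /sh; lia.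
apply: (@minus_known _ (Lk R N a)); last first.
- move=> y /[dup] yL; rewrite /Lk in_set => /andP[yE /andP[]].
  have [c [d [cd -> hcd]]] := edge_shape yE.
  rewrite ex2 sub2 !inE => hy /andP[hc hd] yx.
  have ec : c = a by apply: ord_inj; move: hc hd hy; rewrite -!leqNgt; lia.
  move: hcd; rewrite /sh => -[ed|[ed|[c0 dN]]].
  + have -> : d = inord a.+1 by apply: ord_inj; rewrite inordK //; lia.
    by rewrite ec.
  + have edb : d = b by apply: ord_inj; lia.
    by move: yx; rewrite ec edb eqxx.
  + have -> : [set c; d] = r0.
      by rewrite /r0; congr [set _; _]; apply: ord_inj; rewrite inordK //; lia.
    exact: rT.
- by apply: ST; apply: chiL.
- rewrite /Lk in_set edge_sh // ex2 sub2 !inE /= eqxx /=; apply/andP; split; lia.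
Qed.

Lemma T_full : (1%:M <= T)%MS.
Proof.
apply/row_subP => i; rewrite row1.
have -> : delta_mx 0 i = chi [set enum_val i].
  apply/matrixP => x y; rewrite (ord1 x) !mxE in_set1 (inj_eq (@enum_val_inj _ _)) eqxx /=.
  by case: (y == i).
have eE := enum_valP i; have [a [b [ab -> hs]]] := edge_shape eE.
apply: (@claim n) => //; exact: ltn_ord.
Qed.

Lemma rank_low : (m <= \rank Sp + 1)%N.
Proof.
have h1 : \rank T = m.
  apply/eqP; rewrite eqn_leq rank_leq_col /=.
  by rewrite -{1}(mxrank1 R m) mxrankS // T_full.
apply: (@leq_trans (\rank T)); first by rewrite h1.
rewrite /T.
apply: leq_trans (mxrank_adds_leqif _ _) _.
by rewrite leq_add2l mxrank_gen rank_leq_row.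
Qed.

End Low.

End E.

Section F.
Variable R : realType.
Variable N : nat.
Local Notation n := N.+2.
Local Notation wt := (@wt R N).
Local Notation sig1 := (@sig1 N).
Local Notation sig2 := (@sig2 N).
Local Notation m := #|edges wt|.
Local Notation Sp := (@Sp R N).
Local Notation chi := (chi wt).
Local Open Scope ring_scope.

Definition fm (e : {set 'I_n}) : R := (mult sig1 e)%:R - (mult sig2 e)%:R.
Definition phi : 'cV[R]_m := \col_j fm (enum_val j).

Lemma chi_phi X : min_cut_sideb wt X -> chi (cut wt X) *m phi = 0.
Proof.
move=> hX; apply/matrixP => i k; rewrite (ord1 i) (ord1 k) !mxE.
rewrite (eq_bigr (fun j => ((enum_val j \in cut wt X) : nat)%:R * fm (enum_val j))); last first.
  by move=> j _; rewrite !mxE ifE.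
rewrite -(big_enum_val (fun e => ((e \in cut wt X) : nat)%:R * fm e)) /=.
have -> : \sum_(e in edges wt) ((e \in cut wt X) : nat)%:R * fm e = \sum_(e in cut wt X) fm e.
  rewrite big_mkcond [RHS]big_mkcond; apply: eq_bigr => e _.
  case: (boolP (e \in cut wt X)) => h.
    have eE : e \in edges wt by move: h; rewrite /cut in_set => /andP[].
    by rewrite eE mul1r.
  by case: (e \in edges wt); rewrite // mul0r.
rewrite /fm sumrB -!natr_sum (key R (good1 N) (or_introl erefl)) (key R (good2 N) (or_intror erefl)).
by have [-> ->] := min_side_cross hX; rewrite subrr.
Qed.

Lemma Sp_ker : (Sp <= kermx phi)%MS.
Proof. by apply/sumsmx_subP => X hX; rewrite genmxE; apply/sub_kermxP; exact: chi_phi. Qed.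

Section Up.
Hypothesis hN : (2 <= N)%N.

Lemma phi_neq0 : phi != 0.
Proof.
pose p1 : {set 'I_n} := [set inord 1; inord 2].
have p1E : p1 \in edges wt by apply: edge_of_shape; rewrite /sh; lia.
pose j0 := enum_rank_in p1E p1.
have ej : enum_val j0 = p1 by rewrite /j0 enum_rankK_in.
apply/negP => /eqP /matrixP /(_ j0 0); rewrite !mxE ej /fm.
have -> : mult sig2 p1 = 0%N.
  apply/eqP; rewrite cards_eq0; apply/eqP/setP => v; rewrite !inE; apply/negP => /eqP /set2_eqN.
  rewrite sig2E !inordK // /s2; have := ltn_ord v; repeat case: ifP; lia.
rewrite subr0 => /eqP; rewrite pnatr_eq0 => /eqP /cards0_eq /setP /(_ (inord 1)).
rewrite !inE; suff -> : [set inord 1; sig1 (inord 1)] = p1 by rewrite eqxx.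
rewrite /p1; congr [set _; _].
apply: ord_inj; rewrite sig1E /s1 !inordK; try case: ifP; lia.
Qed.

Lemma rank_up : (\rank Sp <= m - 1)%N.
Proof.
apply: leq_trans (mxrankS Sp_ker) _; rewrite mxrank_ker.
have : (\rank phi != 0)%N by rewrite mxrank_eq0 phi_neq0.
lia.
Qed.

Lemma main_big : \rank Sp = (2 * n - 3)%N.
Proof.
have := rank_up; have := rank_low R N; have := card_edges R hN; lia.
Qed.

End Up.
End F.

Section G.
Variable R : realType.
Variable N : nat.
Local Notation n := N.+2.
Local Notation wt := (@wt R N).
Local Notation m := #|edges wt|.
Local Notation Sp := (@Sp R N).
Local Notation chi := (chi wt).
Local Open Scope ring_scope.

Lemma full_of_r0 : (chi [set r0 N] <= Sp)%MS -> \rank Sp = m.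
Proof.
move=> h; apply/eqP; rewrite eqn_leq rank_leq_col /=.
rewrite -{1}(mxrank1 R m) mxrankS //; apply: submx_trans (T_full R N) _.
by rewrite /T addsmx_sub submx_refl /= genmxE.
Qed.

Definition p0 : {set 'I_n} := [set inord 0; inord 1].

Lemma p0S : (chi [set p0] <= Sp)%MS.
Proof.
have p0E : p0 \in edges wt by apply: edge_of_shape; rewrite /sh; lia.
apply: (@minus_known R N _ (Mk R N 1)); last first.
- move=> x; rewrite /Mk in_set => /andP[xE /andP[]].
  have [c [d [cd -> hcd]]] := edge_shape xE.
  rewrite ex2 sub2 !inE => hx /andP[hc hd] xp.
  have ec : c = inord 0 by apply: ord_inj; rewrite inordK //; lia.
  have ed : d = inord 1 by apply: ord_inj; rewrite inordK //; lia.
  by move: xp; rewrite ec ed eqxx.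
- by apply: chiM.
- rewrite /Mk in_set p0E /p0 ex2 sub2 !inE !inordK //=.
Qed.

End G.

Section Small.
Variable R : realType.
Local Open Scope ring_scope.

Lemma rank_N0 : \rank (@Sp R 0) = 1%N.
Proof.
have E : r0 0 = p0 0 by [].
rewrite full_of_r0; last by rewrite E p0S.
have -> : edges (@wt R 0) = [set p0 0].
  apply/setP => e; rewrite in_set1; apply/idP/eqP => [eE|->].
    have [a [b [ab -> hs]]] := edge_shape eE.
    have := ltn_ord b => bn.
    by rewrite /p0; congr [set _; _]; apply: ord_inj; rewrite inordK //; lia.
  by apply: edge_of_shape; rewrite /sh; lia.
by rewrite cards1.
Qed.

Lemma rank_N1 : \rank (@Sp R 1) = 3%N.
Proof.
pose p1 : {set 'I_3} := [set inord 1; inord 2].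
have p0E : p0 1 \in edges (@wt R 1) by apply: edge_of_shape; rewrite /sh; lia.
have p1E : p1 \in edges (@wt R 1) by apply: edge_of_shape; rewrite /sh; lia.
have rE : r0 1 \in edges (@wt R 1) by apply: edge_of_shape; rewrite /sh; lia.
rewrite full_of_r0; last first.
  apply: (@minus_known R 1 _ (Lk R 1 0)); last first.
  - move=> y; rewrite /Lk in_set => /andP[yE /andP[]].
    have [c [d [cd -> hcd]]] := edge_shape yE.
    rewrite ex2 sub2 !inE => hy /andP[hc hd] yr.
    have := ltn_ord d => dn.
    have ec : c = inord 0 by apply: ord_inj; rewrite inordK //; lia.
    case: (boolP ((d : nat) == 1%N)) => [/eqP d1|d1].
      have ed : d = inord 1 by apply: ord_inj; rewrite inordK.
      by rewrite ec ed; apply: p0S.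
    have ed : d = inord 2 by apply: ord_inj; rewrite inordK //; lia.
    by move: yr; rewrite ec ed eqxx.
  - by apply: chiL.
  - by rewrite /Lk in_set rE /r0 ex2 sub2 !inE !inordK.
have -> : edges (@wt R 1) = [set p0 1; p1; r0 1].
  apply/setP => e; apply/idP/idP => [eE|].
    have [a [b [ab -> hs]]] := edge_shape eE.
    have := ltn_ord b => bn.
    rewrite !inE; case: (boolP ((a : nat) == 0%N)) => [/eqP a0|a0].
      case: (boolP ((b : nat) == 1%N)) => [/eqP b1|b1].
        apply/orP; left; apply/orP; left; apply/eqP; rewrite /p0 /=.
        by congr [set _; _]; apply: ord_inj; rewrite inordK.
      apply/orP; right; apply/eqP; rewrite /r0 /=; congr [set _; _];
        apply: ord_inj; rewrite inordK //; lia.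
    apply/orP; left; apply/orP; right; apply/eqP; rewrite /p1; congr [set _; _];
      apply: ord_inj; rewrite inordK //; lia.
  by rewrite !in_setU !in_set1 => /orP[/orP[/eqP->|/eqP->]|/eqP->].
rewrite -setUA cardsU1 cards2 !inE.
have n01 : p0 1 != p1.
  by apply/negP => /eqP /set2_eqN; rewrite !inordK //; lia.
have n02 : p0 1 != r0 1.
  by apply/negP => /eqP /set2_eqN; rewrite !inordK //; lia.
have n12 : p1 != r0 1.
  by apply/negP => /eqP /set2_eqN; rewrite !inordK //; lia.
by rewrite (negbTE n01) (negbTE n02) (negbTE n12).
Qed.

End Small.

Unset Implicit Arguments.

Theorem theorem2 (R : realType) (n : nat) :
  (2 <= n)%N ->
  exists w : {set 'I_n} -> R, nonneg_weight w /\ cdim w = (2 * n - 3)%N.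
Proof.
case: n => [|[|N]] // _.
exists (@wt R N); split.
  by move=> e _; rewrite /wt ler0n.
change (\rank (@Sp R N) = (2 * N.+2 - 3)%N).
case: N => [|[|N]].
- by rewrite rank_N0.
- by rewrite rank_N1.
- by apply: main_big.
Qed.
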